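(* Let $\beta>0$, let $F$ be symmetric, positive on $\Gamma_+$, homogeneous of degree 1, with $F^\beta(1,\dots,1)=1$ and $\partial F/\partial\lambda_i>0$, and let $G:\mathbb{S}^n\times(0,\infty)\times(0,\infty)\to(0,\infty)$. Assume that whenever $G(x,ms_1,ms_2)\ge G(x,s_1,s_2)m^{-\beta}$ holds for some $x\in\mathbb{S}^n$ and positive $s_1,s_2,m$, necessarily $m\le1$. Then for any constant $c$, the equation $$G\big(x,u,\sqrt{u^2+|Du|^2}\big)F^\beta(D^2u+uI)=c\quad\text{on }\mathbb{S}^n$$ has at most one positive, smooth, uniformly convex solution $u$.
   Context: $\Gamma_+=\{\lambda\in\mathbb{R}^n:\lambda_i>0\}$; $F$ is applied to symmetric matrices via eigenvalues. $D$ is covariant differentiation on the round $\mathbb{S}^n$, $I$ the identity; uniformly convex means $D^2u+uI>0$. Note $\sqrt{u^2+|Du|^2}$ is the radial function $\rho$ of the convex body with support function $u$. *)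

(* Defs.v *)
From HB Require Import structures.
From mathcomp Require Import all_boot all_order all_algebra perm.
From mathcomp Require Import all_classical all_reals all_analysis.
Set Implicit Arguments. Unset Strict Implicit. Unset Printing Implicit Defensive.
Import Order.TTheory GRing.Theory Num.Theory.
Import numFieldNormedType.Exports.
Local Open Scope ring_scope.

Section Defs.
Variable R : realType.

Definition dotv N (x y : 'rV[R]_N) : R := \sum_i x 0 i * y 0 i.
Definition enorm N (x : 'rV[R]_N) : R := Num.sqrt (dotv x x).
Definition on_sphere n (x : 'rV[R]_n.+1) : Prop := enorm x = 1.
Definition ebase N (i : 'I_N) : 'rV[R]_N := \row_j (if j == i then 1 else 0).

Fixpoint iterD N (vs : seq 'rV[R]_N) (f : 'rV[R]_N -> R) : 'rV[R]_N -> R :=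
  match vs with
  | [::] => f
  | v :: vs' => fun y => 'D_v (iterD vs' f) y
  end.

Definition smooth_on N (U : set 'rV[R]_N) (f : 'rV[R]_N -> R) : Prop :=
  forall (vs : seq 'rV[R]_N) (y : 'rV[R]_N), U y ->
    {for y, continuous (iterD vs f)} /\ (forall v, derivable (iterD vs f) y v).

(* A function u on S^n is represented by u : 'rV_(n+1) -> R (only values on
   S^n matter); its 0-homogeneous extension to R^{n+1}\{0}. *)
Definition ext0 n (u : 'rV[R]_n.+1 -> R) (y : 'rV[R]_n.+1) : R :=
  u ((enorm y)^-1 *: y).

Definition smooth_sphere n (u : 'rV[R]_n.+1 -> R) : Prop :=
  smooth_on [set y | y != 0] (ext0 u).

(* Euclidean gradient of the extension: at x in S^n it is the covariant
   gradient Du(x) (a tangent vector) *)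
Definition grad_sph n (u : 'rV[R]_n.+1 -> R) (x : 'rV[R]_n.+1) : 'rV[R]_n.+1 :=
  \row_i ('D_(ebase i) (ext0 u) x).

(* Euclidean Hessian of the 0-homogeneous extension; restricted to the tangent
   space T_x S^n = x^perp it is the covariant Hessian D^2 u(x) *)
Definition hess_sph n (u : 'rV[R]_n.+1 -> R) (x : 'rV[R]_n.+1) : 'M[R]_n.+1 :=
  \matrix_(i, j) ('D_(ebase i) (fun y => 'D_(ebase j) (ext0 u) y) x).

Definition tangent_frame n (x : 'rV[R]_n.+1) (E : 'M[R]_(n, n.+1)) : Prop :=
  E *m E^T = 1%:M /\ E *m x^T = 0.

Definition unif_convex_at n (u : 'rV[R]_n.+1 -> R) (x : 'rV[R]_n.+1) : Prop :=
  forall v : 'rV[R]_n.+1, v *m x^T = 0 -> v != 0 ->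
    0 < (v *m hess_sph u x *m v^T) 0 0 + u x * dotv v v.

(* The equation  G(x,u,sqrt(u^2+|Du|^2)) F^beta(D^2u + uI) = c  at x, with
   F applied to the symmetric matrix D^2u+uI through its eigenvalues lam
   (the matrix of D^2u+uI in the orthonormal frame E is diag lam). *)
Definition equation_at n (F : 'rV[R]_n -> R) (beta : R)
  (G : 'rV[R]_n.+1 -> R -> R -> R) (c : R) (u : 'rV[R]_n.+1 -> R)
  (x : 'rV[R]_n.+1) : Prop :=
  exists (E : 'M[R]_(n, n.+1)) (lam : 'rV[R]_n),
    tangent_frame x E /\
    E *m hess_sph u x *m E^T + u x *: 1%:M = diag_mx lam /\
    G x (u x) (Num.sqrt (u x ^+ 2 + dotv (grad_sph u x) (grad_sph u x)))
      * (F lam `^ beta) = c.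

Definition is_solution n F beta G c (u : 'rV[R]_n.+1 -> R) : Prop :=
  smooth_sphere u /\
  (forall x, on_sphere x -> 0 < u x) /\
  (forall x, on_sphere x -> unif_convex_at u x) /\
  (forall x, on_sphere x -> equation_at F beta G c u x).

Definition Gamma_plus n (lam : 'rV[R]_n) : Prop := forall i, 0 < lam 0 i.

End Defs.

(* Main.v *)
Require Import Defs.
From mathcomp Require Import all_boot all_order all_algebra perm.
From mathcomp Require Import all_classical all_reals all_analysis.
From mathcomp Require Import lra ring zify.
Require Import Defs.
Set Implicit Arguments. Unset Strict Implicit. Unset Printing Implicit Defensive.
Import Order.TTheory GRing.Theory Num.Theory.
Import numFieldNormedType.Exports.
Local Open Scope ring_scope.

Section A.
Variable R : realType.
Local Open Scope classical_set_scope.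

Lemma mvt_any (f df : R -> R) (b : R) :
  (forall t : R, `|t| <= `|b| -> is_derive t (1:R) f (df t)) ->
  exists2 c, `|c| <= `|b| & f b - f 0 = df c * b.
Proof.
move=> H.
have cf : forall a a', `|a| <= `|b| -> `|a'| <= `|b| -> {within `[a, a'], continuous f}.
  move=> a a' ha ha'; apply: derivable_within_continuous => t.
  rewrite in_itv /= => /andP[t1 t2]; apply: (@ex_derive _ _ _ _ _ _ (df t)); apply: H.
  rewrite ler_norml; apply/andP; split.
    by apply: le_trans t1; move: ha; rewrite ler_norml => /andP[].
  by apply: le_trans t2 _; move: ha'; rewrite ler_norml => /andP[].
case: (leP 0 b) => hb.
  have c1 : {within `[0, b], continuous f}.
    by apply: cf; rewrite ?normr0 // normr_ge0.
  have d1 : forall x, x \in `]0, b[%R -> is_derive x (1:R) f (df x).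
    move=> t; rewrite in_itv /= => /andP[t1 t2]; apply: H.
    by rewrite !ger0_norm // ?ltW.
  have [c cin E] := @MVT_segment R f df 0 b hb d1 c1.
  exists c; last by rewrite E subr0.
  by rewrite !ger0_norm ?(itvP cin).
have c1 : {within `[b, 0], continuous f}.
  by apply: cf; rewrite ?normr0 // normr_ge0.
have d1 : forall x, x \in `]b, 0[%R -> is_derive x (1:R) f (df x).
  move=> t; rewrite in_itv /= => /andP[t1 t2]; apply: H.
  by rewrite !ltr0_norm // lerN2 ltW.
have [c cin E] := @MVT_segment R f df b 0 (ltW hb) d1 c1.
exists c.
  rewrite ler_norml; apply/andP; split.
    by rewrite ltr0_norm // opprK (itvP cin).
  by apply: le_trans (normr_ge0 _); rewrite (itvP cin).
by rewrite -opprB E sub0r mulrN opprK.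
Qed.

Lemma line_quot N (g : 'rV[R]_N -> R) z w s :
  (fun h : R => h^-1 *: (((fun t : R => g (t *: w + z)) \o shift s) (h *: 1) - g (s *: w + z)))
  = (fun h : R => h^-1 *: ((g \o shift (s *: w + z)) (h *: w) - g (s *: w + z))).
Proof.
apply/funext => h /=; congr (_ *: (_ - _)); congr g.
by rewrite [h *: 1]mulr1 scalerDl addrA.
Qed.

Lemma line_derivable N (g : 'rV[R]_N -> R) z w s :
  derivable (fun t : R => g (t *: w + z)) s 1 <-> derivable g (s *: w + z) w.
Proof. by rewrite /derivable line_quot. Qed.

Lemma line_derive N (g : 'rV[R]_N -> R) z w s :
  'D_1 (fun t : R => g (t *: w + z)) s = 'D_w g (s *: w + z).
Proof. by rewrite /derive line_quot. Qed.

Lemma D_add_cvg N (g : 'rV[R]_N -> R) y v e (a : R) :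
  derivable g y v ->
  (\forall z \near y, derivable g z e) ->
  {for y, continuous (fun z => 'D_e g z)} ->
  (fun h : R => h^-1 *: ((g \o shift y) (h *: (v + a *: e)) - g y)) @ 0^'
     --> 'D_v g y + a * 'D_e g y.
Proof.
move=> dv de ce.
set B := fun h : R => h^-1 *: ((g \o shift y) (h *: v) - g y).
set A := fun h : R => h^-1 * (g (h *: (v + a *: e) + y) - g (h *: v + y)).
have -> : (fun h : R => h^-1 *: ((g \o shift y) (h *: (v + a *: e)) - g y)) = B \+ A.
  apply/funext => h; rewrite /A /B /= -!/(_ * _) addrC -mulrDr; congr (_ * _).
  by rewrite [RHS]addrC addrA subrK addrC.
apply: cvgD; first exact: dv.
apply/cvgrPdist_lt => eps eps0.
set eps' := eps / (`|a| + 1).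
have eps'0 : 0 < eps' by rewrite divr_gt0 // ltr_pwDr // normr_ge0.
have Hz : \forall z \near y, derivable g z e /\ `|'D_e g y - 'D_e g z| < eps'.
  near=> z; split; near: z; first exact: de.
  by move/cvgrPdist_lt : ce => /(_ eps' eps'0).
move/nbhs_normP : Hz => [r r0 Hr].
set K := `|v| + `|a| * `|e| + 1.
have K0 : 0 < K by rewrite ltr_pwDr // addr_ge0 // mulr_ge0.
near=> h.
have hN0 : h != 0 by near: h; exact: nbhs_dnbhs_neq.
have hs : `|h| < r / K by near: h; apply: dnbhs0_lt; rewrite divr_gt0.
have inball : forall c : R, `|c| <= `|a * h| ->
    derivable g (c *: e + (h *: v + y)) e /\
    `|'D_e g y - 'D_e g (c *: e + (h *: v + y))| < eps'.
  move=> c hc; apply: (Hr (c *: e + (h *: v + y))) => /=.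
  rewrite addrA opprD addrCA subrr addr0 normrN.
  apply: le_lt_trans (ler_normD _ _) _.
  rewrite !normrZ.
  apply: (@le_lt_trans _ _ (`|h| * K)); last by rewrite -ltr_pdivlMr.
  have hc' : `|c| * `|e| <= `|h| * (`|a| * `|e|).
    by rewrite mulrA [`|h| * _]mulrC -normrM ler_wpM2r // normr_ge0.
  have h0 := normr_ge0 h; have e0 := normr_ge0 e; have v0 := normr_ge0 v.
  rewrite /K !mulrDr mulr1.
  apply: le_trans (_ : `|h| * (`|a| * `|e|) + `|h| * `|v| <= _).
    by rewrite lerD.
  move: (`|h| * (`|a| * `|e|)) (`|h| * `|v|) => X Y; lra.
have dd : forall t : R, `|t| <= `|a * h| ->
    is_derive t (1:R) (fun s => g (s *: e + (h *: v + y)))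
      ('D_e g (t *: e + (h *: v + y))).
  move=> t ht; apply: DeriveDef; last exact: line_derive.
  by apply/line_derivable; exact: (proj1 (inball t ht)).
have [c hc E] := mvt_any dd.
have -> : A h = 'D_e g (c *: e + (h *: v + y)) * a.
  rewrite /A.
  have -> : h *: (v + a *: e) + y = (a * h) *: e + (h *: v + y).
    by rewrite scalerDr scalerA [h * a]mulrC addrA; congr (_ + _); exact: addrC.
  have -> : g (h *: v + y) = g (0 *: e + (h *: v + y)) by rewrite scale0r add0r.
  by rewrite E mulrCA [h^-1 * _]mulrCA mulVf // mulr1.
rewrite [X in _ - X]mulrC -mulrBr normrM mulrC.
apply: (@le_lt_trans _ _ (eps' * `|a|)).
  by rewrite ler_wpM2r ?normr_ge0 // ltW // (proj2 (inball c hc)).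
rewrite /eps' -mulrA gtr_pMr // ltr_pdivrMl ?mulr1 ?ltrDl //.
Unshelve. all: by end_near. Qed.


Lemma D_add N (g : 'rV[R]_N -> R) y v e (a : R) :
  derivable g y v ->
  (\forall z \near y, derivable g z e) ->
  {for y, continuous (fun z => 'D_e g z)} ->
  derivable g y (v + a *: e) /\ 'D_(v + a *: e) g y = 'D_v g y + a * 'D_e g y.
Proof.
move=> dv de ce; split.
  apply/cvg_ex; eexists; exact: (D_add_cvg dv de ce).
  have H := (@D_add_cvg N g y v e a dv de ce). rewrite /derive. apply: cvg_lim; last exact H. exact: norm_hausdorff.
Qed.

Lemma ebase_delta N (j : 'I_N) : ebase R j = delta_mx 0 j.
Proof. by apply/rowP => k; rewrite !mxE; case: (k == j). Qed.

Lemma row_ebase N (v : 'rV[R]_N) : v = \sum_j v 0 j *: ebase R j.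
Proof.
rewrite [LHS]row_sum_delta; apply: eq_bigr => j _; by rewrite ebase_delta.
Qed.

Lemma D_lin N (g : 'rV[R]_N -> R) y v :
  (forall j, \forall z \near y, derivable g z (ebase R j)) ->
  (forall j, {for y, continuous (fun z => 'D_(ebase R j) g z)}) ->
  derivable g y v /\ 'D_v g y = \sum_j v 0 j * 'D_(ebase R j) g y.
Proof.
move=> de ce.
suff : forall s : seq 'I_N,
  derivable g y (\sum_(j <- s) v 0 j *: ebase R j) /\
  'D_(\sum_(j <- s) v 0 j *: ebase R j) g y = \sum_(j <- s) v 0 j * 'D_(ebase R j) g y.
  by move=> /(_ (index_enum _)); rewrite -row_ebase.
elim => [|j s [IH1 IH2]].
  by rewrite !big_nil; split; [exact: derivable0 | exact: derive0].
rewrite !big_cons addrC [X in _ = X]addrC -IH2.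
exact: D_add.
Qed.

End A.

Section B.
Variable R : realType.
Local Open Scope classical_set_scope.

Lemma near_nz N (y : 'rV[R]_N) : y != 0 -> \forall z \near y, z != 0.
Proof.
move=> y0; apply/nbhs_normP; exists `|y|; first by rewrite /= normr_gt0.
move=> z /=; apply: contraTneq => ->; by rewrite subr0 ltxx.
Qed.

Lemma smooth_der N (f : 'rV[R]_N -> R) vs y v :
  smooth_on [set y | y != 0] f -> y != 0 ->
  \forall z \near y, derivable (iterD vs f) z v.
Proof.
move=> sf y0; near=> z; apply: (proj2 (sf vs z _)); near: z; exact: near_nz.
Unshelve. all: by end_near. Qed.

Lemma smooth_lin N (f : 'rV[R]_N -> R) vs y v :
  smooth_on [set y | y != 0] f -> y != 0 ->
  'D_v (iterD vs f) y = \sum_j v 0 j * 'D_(ebase R j) (iterD vs f) y.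
Proof.
move=> sf y0; have H := @D_lin R N (iterD vs f) y v; apply: (proj2 (H _ _)) => j.
  exact: smooth_der.
exact: (proj1 (sf (ebase R j :: vs) y y0)).
Qed.

Lemma quad_D2 N (f : 'rV[R]_N -> R) x0 v :
  smooth_on [set y | y != 0] f -> x0 != 0 ->
  'D_v (fun z => 'D_v f z) x0 =
  (v *m (\matrix_(i, j) 'D_(ebase R i) (fun y => 'D_(ebase R j) f y) x0) *m v^T) 0 0.
Proof.
move=> sf x00.
have E1 : 'D_v (fun z => 'D_v f z) x0 =
    'D_v (\sum_j (fun z => v 0 j * 'D_(ebase R j) f z)) x0.
  apply: near_eq_derive; near=> z.
  rewrite fct_sumE; apply: (smooth_lin [::] v sf); near: z; exact: near_nz.
rewrite E1 derive_sum; last first.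
  move=> j; exact: (derivableZ (k := v 0 j) (proj2 (sf [:: ebase R j] x0 x00) v)).
rewrite mxE; apply: eq_bigr => j _.
have -> : 'D_v (fun z => v 0 j * 'D_(ebase R j) f z) x0 =
    v 0 j * 'D_v (fun z => 'D_(ebase R j) f z) x0.
  exact: (deriveZ (v 0 j) (proj2 (sf [:: ebase R j] x0 x00) v)).
rewrite (smooth_lin [:: ebase R j] v sf x00) /= !mxE mulr_sumr mulr_suml.
apply: eq_bigr => i _; rewrite !mxE. ring.
Unshelve. all: by end_near. Qed.


Lemma near0_ball (P : R -> Prop) :
  (\forall h \near (0:R)^', P h) -> exists2 r : R, 0 < r & forall h, `|h| < r -> h != 0 -> P h.
Proof.
rewrite near_withinE => /nbhs_normP [r r0 Hr]; exists r => // h hr h0.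
by apply: Hr => //=; rewrite sub0r normrN.
Qed.

Lemma max2 (phi : R -> R) (d : R) : 0 < d ->
  (forall t, `|t| < d -> derivable phi t 1) ->
  (forall t, `|t| < d -> phi t <= phi 0) ->
  derivable (fun t => 'D_1 phi t) 0 1 ->
  'D_1 phi 0 = 0 /\ 'D_1 (fun t => 'D_1 phi t) 0 <= 0.
Proof.
move=> d0 dphi mphi d2.
have inI : forall t, t \in `]-d, d[%R -> `|t| < d.
  by move=> t; rewrite in_itv /= ltr_norml => /andP[-> ->].
have D10 : 'D_1 phi 0 = 0.
  have := @derive1_at_max R phi (-d) d 0 _ _ _ _.
  case; rewrite ?derive_val //.
  - lra.
  - by move=> t /inI; exact: dphi.
  - by rewrite in_itv /= oppr_lt0 d0.
  - by move=> t /inI; exact: mphi.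
split => //.
rewrite leNgt; apply/negP => pos.
have := d2; rewrite /derivable => /cvgr_dist_lt /(_ _ pos) /near0_ball [r r0 Hr].
set t := Num.min r d / 2.
have t0 : 0 < t by rewrite divr_gt0 // lt_min r0 d0.
have tr : t < Num.min r d by rewrite /t ltr_pdivrMr // ltr_pMr ?ltr1n // lt_min r0 d0.
have tlt : forall c, 0 < c -> c <= t -> `|c| < r /\ `|c| < d.
  move=> c c0 ct; rewrite gtr0_norm //; have := le_lt_trans ct tr.
  by rewrite lt_min => /andP[].
have pos' : forall c, 0 < c -> c <= t -> 0 < 'D_1 phi c.
  move=> c c0 ct; have [cr cd] := tlt c c0 ct.
  have H : `|'D_1 (fun t => 'D_1 phi t) 0 - c^-1 *: ('D_1 phi (c *: 1 + 0) - 'D_1 phi 0)|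
      < 'D_1 (fun t => 'D_1 phi t) 0 := Hr c cr (lt0r_neq0 c0).
  have e : c^-1 *: ('D_1 phi (c *: 1 + 0) - 'D_1 phi 0) = c^-1 *: 'D_1 phi c.
    by rewrite D10 subr0 [c *: 1]mulr1 addr0.
  rewrite e in H.
  have : 0 < c^-1 *: 'D_1 phi c.
    apply: lt_le_trans (_ : 'D_1 (fun t => 'D_1 phi t) 0 - `|'D_1 (fun t => 'D_1 phi t) 0 - c^-1 *: 'D_1 phi c| <= _).
      by rewrite subr_gt0.
    move: ('D_1 (fun t => 'D_1 phi t) 0) (c^-1 *: 'D_1 phi c) => A B; have := ler_norm (A - B); lra.
  by rewrite -[_ *: _]/(_ * _) pmulr_rgt0 // invr_gt0.
have hd : forall x, x \in `]0, t[%R -> is_derive x (1:R) phi ('D_1 phi x).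
  move=> x xin; apply: DeriveDef => //; apply: dphi.
  by rewrite (proj2 (tlt x _ _)) ?(itvP xin) // ltW ?(itvP xin).
have hc : {within `[0, t], continuous phi}.
  apply: derivable_within_continuous => x; rewrite in_itv /= => /andP[x0 xt].
  apply: dphi; apply: le_lt_trans (_ : t < d); first by rewrite ger0_norm.
  by apply: lt_le_trans tr _; rewrite ge_min lexx orbT.
have [c cin E] := @MVT R phi (fun c => 'D_1 phi c) 0 t t0 hd hc.
have : phi t - phi 0 > 0.
  by rewrite E mulr_gt0 ?subr0 // pos' ?(itvP cin) // ltW ?(itvP cin).
by rewrite subr_gt0 ltNge mphi // (proj2 (tlt t t0 (lexx t))).
Qed.

End B.

Section C.
Lemma mulr_ge0_sq (T : realDomainType) (a : T) : 0 <= a * a.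
Proof. by rewrite -expr2 sqr_ge0. Qed.

Variable R : realType.
Local Open Scope classical_set_scope.

Lemma dotvZ N (t : R) (y : 'rV[R]_N) : dotv (t *: y) (t *: y) = t ^+ 2 * dotv y y.
Proof.
rewrite /dotv mulr_sumr; apply: eq_bigr => i _; rewrite !mxE; ring.
Qed.

Lemma dotv_ge0 N (y : 'rV[R]_N) : 0 <= dotv y y.
Proof. by rewrite /dotv sumr_ge0 // => i _; rewrite -expr2 sqr_ge0. Qed.

Lemma dotv_gt0 N (y : 'rV[R]_N) : y != 0 -> 0 < dotv y y.
Proof.
move=> y0; rewrite lt_def dotv_ge0 andbT; apply: contra y0 => /eqP H.
apply/eqP/rowP => i; rewrite mxE; apply/eqP; rewrite -sqrf_eq0 expr2.
have H2 := psumr_eq0P (fun j _ => mulr_ge0_sq (y 0 j)) H.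
by rewrite (H2 i isT).
Qed.

Lemma enormZ N (t : R) (y : 'rV[R]_N) : enorm (t *: y) = `|t| * enorm y.
Proof. by rewrite /enorm dotvZ sqrtrM ?sqr_ge0 // sqrtr_sqr. Qed.

Lemma enorm_gt0 N (y : 'rV[R]_N) : y != 0 -> 0 < enorm y.
Proof. by move=> y0; rewrite /enorm sqrtr_gt0 dotv_gt0. Qed.

Lemma enorm0 N : enorm (0 : 'rV[R]_N) = 0.
Proof. by rewrite -(scale0r (0 : 'rV[R]_N)) enormZ normr0 mul0r. Qed.

Lemma sphere_nz n (x : 'rV[R]_n.+1) : on_sphere x -> x != 0.
Proof.
rewrite /on_sphere => H; apply/eqP => x0; move: H; rewrite x0 enorm0 => /eqP.
by rewrite eq_sym oner_eq0.
Qed.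

Lemma normalize_sphere n (y : 'rV[R]_n.+1) : y != 0 -> on_sphere ((enorm y)^-1 *: y).
Proof.
move=> y0; rewrite /on_sphere enormZ ger0_norm ?invr_ge0 ?ltW ?enorm_gt0 //.
by rewrite mulVf // gt_eqF // enorm_gt0.
Qed.

Lemma ext0_sphere n (u : 'rV[R]_n.+1 -> R) x : on_sphere x -> ext0 u x = u x.
Proof. by rewrite /ext0 /on_sphere => ->; rewrite invr1 scale1r. Qed.

Lemma ext0Z n (u : 'rV[R]_n.+1 -> R) (t : R) y : 0 < t -> ext0 u (t *: y) = ext0 u y.
Proof.
move=> t0; rewrite /ext0 enormZ gtr0_norm // invfM scalerA mulrAC mulVf ?mul1r //.
by rewrite gt_eqF.
Qed.

Lemma ext0_normalize n (u : 'rV[R]_n.+1 -> R) y : y != 0 ->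
  ext0 u y = u ((enorm y)^-1 *: y).
Proof. by []. Qed.


Lemma exists_max n (p : 'rV[R]_n.+1 -> R) :
  (forall y, y != 0 -> {for y, continuous p}) ->
  (forall (t : R) y, 0 < t -> p (t *: y) = p y) ->
  exists2 c : 'rV[R]_n.+1, c != 0 & forall y, y != 0 -> p y <= p c.
Proof.
move=> pc ph.
set K := [set y : 'rV[R]_n.+1 | `|y| = 1].
have nK : forall y : 'rV[R]_n.+1, y != 0 -> K (`|y|^-1 *: y).
  by move=> y y0; rewrite /K /= normrZ normfV normr_id mulVf // normr_eq0.
have Knz : forall y, K y -> y != 0.
  by move=> y; rewrite /K /= => Ky; apply/eqP => y0; move: Ky; rewrite y0 normr0 => /eqP; rewrite eq_sym oner_eq0.
have K0 : K !=set0.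
  have e0 : (ebase R (@ord0 n)) != 0.
    by apply/eqP => /rowP /(_ ord0); rewrite !mxE eqxx => /eqP; rewrite oner_eq0.
  by exists (`|ebase R (@ord0 n)|^-1 *: ebase R (@ord0 n)); exact: nK.
have Kc : compact K.
  apply: bounded_closed_compact.
    exists 1; split; first exact: real1.
    by move=> M M1 y /= Ky; rewrite Ky ltW.
  have -> : K = (fun y : 'rV[R]_n.+1 => `|y|) @^-1` [set 1] by [].
  apply: preimage_closed; last exact: closed_eq.
  by move=> y _; exact: norm_continuous.
have pK : {within K, continuous p}.
  apply/continuous_in_subspaceT => z; rewrite inE => Kz; exact: pc (Knz z Kz).
have [c cK cmax] := EVT_max_rV K0 Kc pK.
exists c; first by apply: Knz; rewrite inE in cK.
move=> y y0; rewrite -(ph (`|y|^-1) y) ?invr_gt0 ?normr_gt0 //.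
by apply: cmax; rewrite inE; exact: nK.
Qed.

End C.

Section D.
Variable R : realType.
Local Open Scope classical_set_scope.

Lemma mono1 n (F : 'rV[R]_n -> R) (nu : 'rV[R]_n) (i : 'I_n) (d : R) :
  (forall t, 0 <= t <= d -> derivable F (t *: ebase R i + nu) (ebase R i) /\
                            0 < 'D_(ebase R i) F (t *: ebase R i + nu)) ->
  0 <= d -> F nu <= F (d *: ebase R i + nu).
Proof.
move=> H d0.
pose g := fun t : R => F (t *: ebase R i + nu).
have hd : forall x, x \in `]0, d[%R -> is_derive x (1:R) g ('D_(ebase R i) F (x *: ebase R i + nu)).
  move=> x xin; apply: DeriveDef; last exact: line_derive.
  apply/line_derivable; apply: (proj1 (H x _)).
  by rewrite !ltW ?(itvP xin).
have hc : {within `[0, d], continuous g}.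
  apply: derivable_within_continuous => x; rewrite in_itv /= => xin.
  by apply/line_derivable; exact: (proj1 (H x xin)).
have [c cin E] := @MVT_segment R g _ 0 d d0 hd hc.
have : 0 <= g d - g 0.
  rewrite E subr0 mulr_ge0 // ltW //; apply: (proj2 (H c _)).
  by rewrite !(itvP cin).
by rewrite subr_ge0 /g scale0r add0r.
Qed.

Lemma F_mono n (F : 'rV[R]_n -> R) :
  (forall lam (i : 'I_n), Gamma_plus lam ->
     derivable F lam (ebase R i) /\ 0 < 'D_(ebase R i) F lam) ->
  forall lam mu : 'rV[R]_n, Gamma_plus lam -> (forall i, lam 0 i <= mu 0 i) -> F lam <= F mu.
Proof.
move=> HF lam mu lp lm.
pose nu (k : nat) : 'rV[R]_n := \row_i (if (i < k)%N then mu 0 i else lam 0 i).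
have nuG : forall k, Gamma_plus (nu k).
  move=> k i; rewrite mxE; case: ifP => _; last exact: lp.
  exact: lt_le_trans (lp i) (lm i).
have nu0 : nu 0%N = lam by apply/rowP => i; rewrite mxE.
have nun : nu n = mu by apply/rowP => i; rewrite mxE ltn_ord.
suff : forall k, (k <= n)%N -> F lam <= F (nu k) by move/(_ n (leqnn n)); rewrite nun.
elim => [|k IH] kn; first by rewrite nu0.
apply: le_trans (IH (ltnW kn)) _.
set i : 'I_n := Ordinal kn.
have -> : nu k.+1 = (mu 0 i - lam 0 i) *: ebase R i + nu k.
  apply/rowP => j; rewrite !mxE ltnS leq_eqVlt.
  case: (eqVneq j i) => [->|ji] /=; first by rewrite eqxx ltnn mulr1 subrK.
  have -> : (j == k :> nat) = false.
    by apply/negbTE; apply: contra ji => /eqP jk; apply/eqP/val_inj.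
  by rewrite mulr0 add0r.
have nuG' : forall k (j : 'I_n), 0 < (if (j < k)%N then mu 0 j else lam 0 j).
  by move=> k' j; have := nuG k' j; rewrite mxE.
apply: mono1; last by rewrite subr_ge0.
move=> t /andP[t0 td]; apply: HF => j; rewrite !mxE.
case: (eqVneq j i) => [->|ji]; rewrite ?mulr1 ?mulr0 ?add0r; last exact: nuG'.
by apply: lt_le_trans (nuG' k i) _; rewrite lerDr.
Qed.

End D.

Section E.
Variable R : realType.

Lemma argmin_set n (S : {set 'I_n}) (d : 'I_n -> R) :
  (0 < #|S|)%N -> exists2 i, i \in S & forall j, j \in S -> d i <= d j.
Proof.
case/card_gt0P => i0 Hi0.
case: (@arg_minP _ R _ i0 (mem S) d Hi0) => i iS imin.
by exists i.
Qed.

Lemma argmax_set n (S : {set 'I_n}) (d : 'I_n -> R) :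
  (0 < #|S|)%N -> exists2 i, i \in S & forall j, j \in S -> d j <= d i.
Proof.
move=> /(argmin_set (fun i => - d i)) [i iS H]; exists i => // j /H.
by rewrite lerN2.
Qed.

Lemma rowsub_orth m n (f : 'I_m -> 'I_n) : injective f ->
  rowsub f (1%:M : 'M[R]_n) *m (rowsub f (1%:M : 'M[R]_n))^T = 1%:M.
Proof.
move=> fi; rewrite mul_rowsub_mx mul1mx; apply/matrixP => i j.
by rewrite !mxE (inj_eq fi) eq_sym.
Qed.

Lemma norm_frame m N (b : 'rV[R]_m) (E : 'M[R]_(m, N)) :
  E *m E^T = 1%:M ->
  ((b *m E) *m (b *m E)^T) 0 0 = \sum_i b 0 i ^+ 2.
Proof.
move=> EE; rewrite trmx_mul mulmxA -[b *m E *m E^T]mulmxA EE mulmx1 mxE.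
by apply: eq_bigr => i _; rewrite mxE expr2.
Qed.

Lemma dotv_mx N (z : 'rV[R]_N) : dotv z z = (z *m z^T) 0 0.
Proof. by rewrite /dotv mxE; apply: eq_bigr => i _; rewrite mxE. Qed.


Lemma support_rowsub m n (f : 'I_m -> 'I_n) (S : {set 'I_n}) (a : 'rV[R]_m) i :
  (forall l, f l \in S) -> i \notin S -> (a *m rowsub f 1%:M) 0 i = 0.
Proof.
move=> fS iS; rewrite mxE big1 // => l _; rewrite !mxE.
have -> : (f l == i) = false by apply/negbTE; apply: contraNneq iS => <-.
by rewrite mulr0.
Qed.

Lemma bound_low n (b d : 'rV[R]_n) (S : {set 'I_n}) i1 :
  (forall i, i \notin S -> b 0 i = 0) -> (forall j, j \in S -> d 0 i1 <= d 0 j) ->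
  d 0 i1 * \sum_i b 0 i ^+ 2 <= \sum_i b 0 i ^+ 2 * d 0 i.
Proof.
move=> bS dS; rewrite mulr_sumr; apply: ler_sum => i _.
case: (boolP (i \in S)) => iS.
  by rewrite mulrC; apply: ler_wpM2l; [exact: sqr_ge0 | exact: dS].
by rewrite bS // expr0n /= mul0r mulr0.
Qed.

Lemma bound_up n (b d : 'rV[R]_n) (S : {set 'I_n}) i2 :
  (forall i, i \notin S -> b 0 i = 0) -> (forall j, j \in S -> d 0 j <= d 0 i2) ->
  \sum_i b 0 i ^+ 2 * d 0 i <= d 0 i2 * \sum_i b 0 i ^+ 2.
Proof.
move=> bS dS; rewrite mulr_sumr; apply: ler_sum => i _.
case: (boolP (i \in S)) => iS.
  by rewrite [X in _ <= X]mulrC; apply: ler_wpM2l; [exact: sqr_ge0 | exact: dS].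
by rewrite bS // expr0n /= mul0r mulr0.
Qed.

Lemma cf_pair n (x0 : 'rV[R]_n.+1) (E1 E2 : 'M[R]_(n, n.+1)) (d1 d2 : 'rV[R]_n)
  (q1 q2 : 'rV[R]_n.+1 -> R) (S1 S2 : {set 'I_n}) :
  x0 != 0 -> tangent_frame x0 E1 -> tangent_frame x0 E2 ->
  (forall z, z *m x0^T = 0 -> q1 z <= q2 z) ->
  (forall b, q1 (b *m E1) = \sum_i b 0 i ^+ 2 * d1 0 i) ->
  (forall b, q2 (b *m E2) = \sum_i b 0 i ^+ 2 * d2 0 i) ->
  (n < #|S1| + #|S2|)%N ->
  exists i1, exists i2, [/\ i1 \in S1, i2 \in S2 & d1 0 i1 <= d2 0 i2].
Proof.
move=> x00 [E1o E1t] [E2o E2t] qle q1E q2E card.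
have c1 : (#|S1| <= n)%N by rewrite -[X in (_ <= X)%N]card_ord max_card.
have c2 : (#|S2| <= n)%N by rewrite -[X in (_ <= X)%N]card_ord max_card.
have S1n : (0 < #|S1|)%N by lia.
have S2n : (0 < #|S2|)%N by lia.
have [i1 i1S i1m] := argmin_set (fun i => d1 0 i) S1n.
have [i2 i2S i2m] := argmax_set (fun i => d2 0 i) S2n.
exists i1, i2; split => //.
pose f1 := fun l : 'I_#|S1| => enum_val l.
pose f2 := fun l : 'I_#|S2| => enum_val l.
pose A1 := rowsub f1 E1.
pose A2 := rowsub f2 E2.
have rA1 : \rank A1 = #|S1|.
  apply/eqP; change (row_free A1); apply/row_freeP; exists A1^T.
  rewrite /A1 rowsubE trmx_mul mulmxA -[_ *m E1 *m E1^T]mulmxA E1o mulmx1.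
  by apply: rowsub_orth; exact: enum_val_inj.
have rA2 : \rank A2 = #|S2|.
  apply/eqP; change (row_free A2); apply/row_freeP; exists A2^T.
  rewrite /A2 rowsubE trmx_mul mulmxA -[_ *m E2 *m E2^T]mulmxA E2o mulmx1.
  by apply: rowsub_orth; exact: enum_val_inj.
have Ker : (A1 + A2 <= kermx x0^T)%MS.
  rewrite addsmx_sub !sub_kermx /A1 /A2 !mul_rowsub_mx E1t E2t.
  by apply/andP; split; apply/eqP/matrixP => i j; rewrite !mxE.
have rK : \rank (kermx x0^T) = n.
  by rewrite mxrank_ker mxrank_tr rank_rV x00 subn1.
have rS := mxrankS Ker.
have cap := mxrank_sum_cap A1 A2.
have : (0 < \rank (A1 :&: A2)%MS)%N by lia.
rewrite lt0n mxrank_eq0 => C0.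
have [k rk] : exists k, row k (A1 :&: A2)%MS != 0.
  apply/existsP; apply: contraNT C0 => /existsPn H.
  apply/eqP/row_matrixP => k; rewrite row0; apply/eqP; exact: negbNE (H k).
set z := row k (A1 :&: A2)%MS.
have z1 : (z <= A1)%MS := submx_trans (row_sub k _) (capmxSl _ _).
have z2 : (z <= A2)%MS := submx_trans (row_sub k _) (capmxSr _ _).
case/submxP: z1 => a1 za1; case/submxP: z2 => a2 za2.
pose b1 := a1 *m rowsub f1 1%:M; pose b2 := a2 *m rowsub f2 1%:M.
have zb1 : z = b1 *m E1 by rewrite za1 /A1 rowsubE mulmxA.
have zb2 : z = b2 *m E2 by rewrite za2 /A2 rowsubE mulmxA.
have sb1 : forall i, i \notin S1 -> b1 0 i = 0.
  by move=> i iS; apply: support_rowsub iS => l; exact: enum_valP.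
have sb2 : forall i, i \notin S2 -> b2 0 i = 0.
  by move=> i iS; apply: support_rowsub iS => l; exact: enum_valP.
have zt : z *m x0^T = 0 by rewrite zb1 -mulmxA E1t mulmx0.
have nz : 0 < (z *m z^T) 0 0 by rewrite -dotv_mx dotv_gt0.
have N1 : (z *m z^T) 0 0 = \sum_i b1 0 i ^+ 2 by rewrite zb1 norm_frame.
have N2 : (z *m z^T) 0 0 = \sum_i b2 0 i ^+ 2 by rewrite zb2 norm_frame.
have L1 : d1 0 i1 * (z *m z^T) 0 0 <= q1 z.
  by rewrite N1 zb1 q1E; apply: bound_low sb1 i1m.
have U2 : q2 z <= d2 0 i2 * (z *m z^T) 0 0.
  by rewrite N2 zb2 q2E; apply: bound_up sb2 i2m.
have := le_trans L1 (le_trans (qle z zt) U2).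
by rewrite ler_pM2r.
Qed.

End E.

Section F.
Variable R : realType.

Lemma sort_perm n (f : 'I_n -> R) :
  exists s : {perm 'I_n}, forall k l : 'I_n, (k <= l)%N -> f (s k) <= f (s l).
Proof.
pose r := [rel i j : 'I_n | f i <= f j].
pose s0 := sort r (enum 'I_n).
have sz : size s0 = n by rewrite size_sort size_enum_ord.
have us : uniq s0 by rewrite sort_uniq enum_uniq.
have so : sorted r s0 by apply: sort_sorted => i j; exact: le_total.
pose g := fun k : 'I_n => nth k s0 k.
have gi : injective g.
  move=> k l; rewrite /g (set_nth_default l k) ?sz // => /eqP.
  by rewrite nth_uniq ?sz // => /eqP; apply: val_inj.
exists (perm gi) => k l kl; rewrite !permE /g (set_nth_default k l) ?sz //.
have rt : transitive r by move=> a b c; exact: le_trans.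
have rr : reflexive r by move=> a; exact: lexx.
have := @sorted_leq_nth _ r rt rr k s0 so k l.
by apply; rewrite ?inE ?sz.
Qed.

Lemma F_compare n (F : 'rV[R]_n -> R) (x0 : 'rV[R]_n.+1) (E1 E2 : 'M[R]_(n, n.+1))
  (lam1 lam2 : 'rV[R]_n) (q1 q2 : 'rV[R]_n.+1 -> R) :
  (forall (s : {perm 'I_n}) lam, F (col_perm s lam) = F lam) ->
  (forall lam (i : 'I_n), Gamma_plus lam ->
     derivable F lam (ebase R i) /\ 0 < 'D_(ebase R i) F lam) ->
  Gamma_plus lam1 ->
  x0 != 0 -> tangent_frame x0 E1 -> tangent_frame x0 E2 ->
  (forall z, z *m x0^T = 0 -> q1 z <= q2 z) ->
  (forall b, q1 (b *m E1) = \sum_i b 0 i ^+ 2 * lam1 0 i) ->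
  (forall b, q2 (b *m E2) = \sum_i b 0 i ^+ 2 * lam2 0 i) ->
  F lam1 <= F lam2.
Proof.
move=> Fs HF G1 x00 t1 t2 qle q1E q2E.
have [s1 hs1] := sort_perm (fun i => lam1 0 i).
have [s2 hs2] := sort_perm (fun i => lam2 0 i).
rewrite -(Fs s1 lam1) -(Fs s2 lam2).
apply: (F_mono HF).
  by move=> i; rewrite mxE.
move=> k; rewrite !mxE.
pose A := [set l : 'I_n | (k <= l)%N].
pose B := [set l : 'I_n | (l <= k)%N].
have cAB : (#|A| + #|B| = n.+1)%N.
  rewrite -cardsUI.
  have -> : A :|: B = [set: 'I_n].
    by apply/setP => l; rewrite !inE; case: (leqP k l) => //= /ltnW ->.
  have -> : A :&: B = [set k].
    apply/setP => l; rewrite !inE -eqn_leq eq_sym; apply/eqP/eqP => [/val_inj|->] //.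
  by rewrite cardsT card_ord cards1 addn1.
have card : (n < #|[set s1 l | l in A]| + #|[set s2 l | l in B]|)%N.
  by rewrite !card_imset ?cAB //; exact: perm_inj.
have [i1 [i2 [i1S i2S le]]] := cf_pair x00 t1 t2 qle q1E q2E card.
case/imsetP: i1S => l1; rewrite inE => kl1 e1; rewrite e1 in le.
case/imsetP: i2S => l2; rewrite inE => l2k e2; rewrite e2 in le.
exact: le_trans (hs1 k l1 kl1) (le_trans le (hs2 l2 k l2k)).
Qed.

End F.

Section G.
Variable R : realType.
Local Open Scope classical_set_scope.

Lemma at_max N (f1 f2 : 'rV[R]_N -> R) (p v : 'rV[R]_N) (M : R) :
  smooth_on [set y | y != 0] f1 -> smooth_on [set y | y != 0] f2 -> p != 0 ->
  (forall y, y != 0 -> f1 y - M * f2 y <= 0) -> f1 p - M * f2 p = 0 ->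
  'D_v f1 p = M * 'D_v f2 p /\
  'D_v (fun z => 'D_v f1 z) p <= M * 'D_v (fun z => 'D_v f2 z) p.
Proof.
move=> s1 s2 p0 wle wp.
have [r r0 Hr] : exists2 r : R, 0 < r & forall z, `|p - z| < r -> z != 0.
  by have /nbhs_normP [r r0 Hr] := near_nz p0; exists r => // z hz; apply: Hr.
pose d := r / (`|v| + 1).
have d0 : 0 < d by rewrite divr_gt0 // ltr_pwDr // normr_ge0.
have nzt : forall t, `|t| < d -> t *: v + p != 0.
  move=> t ht; apply: Hr; rewrite opprD addrCA subrr addr0 normrN normrZ.
  apply: le_lt_trans (_ : `|t| * (`|v| + 1) < r); last by rewrite -ltr_pdivlMr // ltr_pwDr.
  by rewrite ler_wpM2l ?normr_ge0 // lerDl.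
pose g := fun z => f1 z - M * f2 z.
have dg : forall z, z != 0 -> derivable g z v.
  move=> z z0; have := derivableB (proj2 (s1 [::] z z0) v)
    (derivableZ (k := M) (proj2 (s2 [::] z z0) v)).
  by [].
have Dg : forall z, z != 0 -> 'D_v g z = 'D_v f1 z - M * 'D_v f2 z.
  move=> z z0; have := deriveB (proj2 (s1 [::] z z0) v)
    (derivableZ (k := M) (proj2 (s2 [::] z z0) v)).
  rewrite (deriveZ M (proj2 (s2 [::] z z0) v)) => H; exact: H.
pose phi := fun t : R => g (t *: v + p).
pose g' := fun z => 'D_v f1 z - M * 'D_v f2 z.
have eg' : \forall z \near p, 'D_v g z = g' z.
  near=> z; apply: Dg; near: z; exact: near_nz.
have dg' : derivable g' p v.
  have := derivableB (proj2 (s1 [:: v] p p0) v)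
    (derivableZ (k := M) (proj2 (s2 [:: v] p p0) v)).
  by [].
have Dg' : 'D_v g' p = 'D_v (fun z => 'D_v f1 z) p - M * 'D_v (fun z => 'D_v f2 z) p.
  have := deriveB (proj2 (s1 [:: v] p p0) v)
    (derivableZ (k := M) (proj2 (s2 [:: v] p p0) v)).
  rewrite (deriveZ M (proj2 (s2 [:: v] p p0) v)) => H; exact: H.
have ephi : (fun t => 'D_1 phi t) = (fun t => 'D_v g (t *: v + p)).
  by apply/funext => t; rewrite /phi line_derive.
have dphi : forall t, `|t| < d -> derivable phi t 1.
  by move=> t ht; apply/line_derivable; exact: dg (nzt t ht).
have phi0 : phi 0 = 0 by rewrite /phi scale0r add0r.
have mphi : forall t, `|t| < d -> phi t <= phi 0.
  by move=> t ht; rewrite phi0; apply: wle; exact: nzt.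
have d2 : derivable (fun t => 'D_1 phi t) 0 1.
  rewrite ephi; apply/(line_derivable (fun z => 'D_v g z)); rewrite scale0r add0r.
  apply: near_eq_derivable dg'; near=> z; apply/esym; near: z; exact: eg'.
have [h1 h2] := max2 d0 dphi mphi d2.
split.
  move: h1; rewrite /phi line_derive scale0r add0r Dg //.
  by move/eqP; rewrite subr_eq0 => /eqP.
move: h2; rewrite ephi (line_derive (fun z => 'D_v g z)) scale0r add0r.
rewrite (near_eq_derive _ eg') Dg' subr_le0 //.
Unshelve. all: by end_near. Qed.

End G.

Section H.
Variable R : realType.

Lemma quad_frame m N (b : 'rV[R]_m) (E : 'M[R]_(m, N)) (H : 'M[R]_N) (a : R)
    (lam : 'rV[R]_m) :
  E *m E^T = 1%:M -> E *m H *m E^T + a *: 1%:M = diag_mx lam ->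
  ((b *m E) *m H *m (b *m E)^T) 0 0 + a * dotv (b *m E) (b *m E)
    = \sum_i b 0 i ^+ 2 * lam 0 i.
Proof.
move=> EE HE.
have e1 : (b *m E) *m H *m (b *m E)^T = b *m (E *m H *m E^T) *m b^T.
  by rewrite trmx_mul !mulmxA.
have e2 : dotv (b *m E) (b *m E) = (b *m b^T) 0 0.
  by rewrite dotv_mx trmx_mul mulmxA -[b *m E *m E^T]mulmxA EE mulmx1.
have e3 : a * (b *m b^T) 0 0 = (b *m (a *: 1%:M) *m b^T) 0 0.
  by rewrite scalemx1 mul_mx_scalar -scalemxAl [RHS]mxE.
have e4 : forall A B : 'M[R]_1, A 0 0 + B 0 0 = (A + B) 0 0 by move=> A B; rewrite mxE.
rewrite e1 e2 e3 e4 -mulmxDl -mulmxDr HE mul_mx_diag mxE.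
by apply: eq_bigr => i _; rewrite !mxE expr2 mulrC mulrA.
Qed.


Lemma delta_sum n (i : 'I_n) (w : 'rV[R]_n) :
  \sum_j (delta_mx 0 i : 'rV[R]_n) 0 j ^+ 2 * w 0 j = w 0 i.
Proof.
rewrite (bigD1 i) //= big1 => [|j ji]; first by rewrite !mxE !eqxx expr1n mul1r addr0.
by rewrite !mxE (negbTE ji) andbF expr0n mul0r.
Qed.

Lemma lam_pos n (u : 'rV[R]_n.+1 -> R) x (E : 'M[R]_(n, n.+1)) (lam : 'rV[R]_n) :
  unif_convex_at u x -> tangent_frame x E ->
  E *m hess_sph u x *m E^T + u x *: 1%:M = diag_mx lam -> Gamma_plus lam.
Proof.
move=> cv [EE Ex] HE i.
pose b : 'rV[R]_n := delta_mx 0 i.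
have nb : ((b *m E) *m (b *m E)^T) 0 0 = 1.
  rewrite norm_frame //; have := delta_sum i (const_mx 1); rewrite mxE => <-.
  by apply: eq_bigr => j _; rewrite !mxE mulr1.
have t : b *m E *m x^T = 0 by rewrite -mulmxA Ex mulmx0.
have nz : b *m E != 0.
  by apply/eqP => v0; move: nb; rewrite v0 mul0mx mxE => /esym/eqP; rewrite oner_eq0.
have := cv (b *m E) t nz.
by rewrite (quad_frame _ EE HE) delta_sum.
Qed.

End H.

Section I.
Variable R : realType.

Lemma one_side (n : nat) (beta : R)
  (F : 'rV[R]_n -> R) (G : 'rV[R]_n.+1 -> R -> R -> R) :
  0 < beta ->
  (forall (s : {perm 'I_n}) (lam : 'rV[R]_n), F (col_perm s lam) = F lam) ->
  (forall lam, Gamma_plus lam -> 0 < F lam) ->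
  (forall (t : R) lam, 0 < t -> Gamma_plus lam -> F (t *: lam) = t * F lam) ->
  (forall lam (i : 'I_n), Gamma_plus lam ->
     derivable F lam (ebase R i) /\ 0 < 'D_(ebase R i) F lam) ->
  (forall x s1 s2, on_sphere x -> 0 < s1 -> 0 < s2 -> 0 < G x s1 s2) ->
  (forall x s1 s2 m, on_sphere x -> 0 < s1 -> 0 < s2 -> 0 < m ->
     G x (m * s1) (m * s2) >= G x s1 s2 * m `^ (- beta) -> m <= 1) ->
  forall (c : R) (u1 u2 : 'rV[R]_n.+1 -> R),
    is_solution F beta G c u1 -> is_solution F beta G c u2 ->
    forall x, on_sphere x -> u1 x <= u2 x.
Proof.
move=> b0 Fs Fp Fh Fd Gp Gh c u1 u2 [sm1 [pos1 [cv1 eq1]]] [sm2 [pos2 [cv2 eq2]]] x sx.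
pose f1 := ext0 u1; pose f2 := ext0 u2.
have f2pos : forall y, y != 0 -> 0 < f2 y.
  by move=> y y0; apply: pos2; exact: normalize_sphere.
pose psi := fun y => f1 y / f2 y.
have cont : forall y, y != 0 -> {for y, continuous psi}.
  move=> y y0.
  have c1 : {for y, continuous f1} := proj1 (sm1 [::] y y0).
  have c2 : {for y, continuous f2} := proj1 (sm2 [::] y y0).
  have n2 : f2 y != 0 by rewrite gt_eqF // f2pos.
  exact: (cvgM c1 (cvgV n2 c2)).
have hom : forall (t : R) y, 0 < t -> psi (t *: y) = psi y.
  by move=> t y t0; rewrite /psi /f1 /f2 !ext0Z.
have [c0 c00 cmax] := exists_max cont hom.
pose p := (enorm c0)^-1 *: c0.
have sp : on_sphere p := normalize_sphere c00.
have p0 : p != 0 := sphere_nz sp.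
have psip : psi p = psi c0 by apply: hom; rewrite invr_gt0 enorm_gt0.
pose M := f1 p / f2 p.
have f1pos : forall y, y != 0 -> 0 < f1 y.
  by move=> y y0; apply: pos1; exact: normalize_sphere.
have M0 : 0 < M by rewrite divr_gt0 // ?f1pos ?f2pos.
have wle : forall y, y != 0 -> f1 y - M * f2 y <= 0.
  move=> y y0; rewrite subr_le0 -ler_pdivrMr ?f2pos //.
  by rewrite /M -[f1 p / f2 p]/(psi p) psip; exact: cmax.
have wp : f1 p - M * f2 p = 0.
  by rewrite /M divfK ?subrr // gt_eqF // f2pos.
suff M1 : M <= 1.
  have := wle x (sphere_nz sx); rewrite /f1 /f2 !ext0_sphere // subr_le0 => h.
  by apply: le_trans h _; rewrite ler_piMl // ltW // pos2.
case: (eq1 p sp) => E1 [lam1 [t1 [d1 e1]]].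
case: (eq2 p sp) => E2 [lam2 [t2 [d2 e2]]].
have fo := fun v => at_max v sm1 sm2 p0 wle wp.
have up : u1 p = M * u2 p.
  by apply/eqP; rewrite -subr_eq0 -(ext0_sphere u1 sp) -(ext0_sphere u2 sp) wp.
have gr : grad_sph u1 p = M *: grad_sph u2 p.
  by apply/rowP => i; rewrite !mxE; exact: (proj1 (fo _)).
pose rho2 := Num.sqrt (u2 p ^+ 2 + dotv (grad_sph u2 p) (grad_sph u2 p)).
have u2p : 0 < u2 p := pos2 p sp.
have rho20 : 0 < rho2.
  rewrite /rho2 sqrtr_gt0; apply: lt_le_trans (_ : 0 < u2 p ^+ 2) _.
    by rewrite exprn_gt0.
  by rewrite lerDl dotv_ge0.
have rho1 : Num.sqrt (u1 p ^+ 2 + dotv (grad_sph u1 p) (grad_sph u1 p)) = M * rho2.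
  rewrite up gr dotvZ exprMn -mulrDr sqrtrM ?sqr_ge0 // sqrtr_sqr gtr0_norm //.
have G1 : Gamma_plus lam1 := lam_pos (cv1 p sp) t1 d1.
have G2 : Gamma_plus lam2 := lam_pos (cv2 p sp) t2 d2.
have Fle : F lam1 <= F (M *: lam2).
  pose q1 := fun z : 'rV[R]_n.+1 => (z *m hess_sph u1 p *m z^T) 0 0 + u1 p * dotv z z.
  pose q2 := fun z : 'rV[R]_n.+1 => M * ((z *m hess_sph u2 p *m z^T) 0 0 + u2 p * dotv z z).
  apply: (@F_compare R n F p E1 E2 lam1 (M *: lam2) q1 q2 Fs Fd G1 p0 t1 t2).
  - move=> z _.
    have h1 : (z *m hess_sph u1 p *m z^T) 0 0 = 'D_z (fun y => 'D_z f1 y) p.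
      exact: (esym (quad_D2 z sm1 p0)).
    have h2 : (z *m hess_sph u2 p *m z^T) 0 0 = 'D_z (fun y => 'D_z f2 y) p.
      exact: (esym (quad_D2 z sm2 p0)).
    rewrite /q1 /q2 [X in X + _ <= _]h1 [X in _ <= _ * (X + _)]h2.
    rewrite [u1 p]up mulrDr mulrA lerD2r.
    exact: (proj2 (fo z)).
  - by move=> b; rewrite /q1 (quad_frame _ t1.1 d1).
  - move=> b; rewrite /q2 (quad_frame _ t2.1 d2) mulr_sumr.
    by apply: eq_bigr => i _; rewrite mxE mulrCA.
have Fl1 : 0 < F lam1 := Fp lam1 G1.
have Fl2 : 0 < F lam2 := Fp lam2 G2.
rewrite (Fh M lam2 M0 G2) in Fle.
have pw : F lam1 `^ beta <= M `^ beta * F lam2 `^ beta.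
  rewrite -powRM ?(ltW M0) ?(ltW Fl2) //.
  have H := @ge0_ler_powR R beta (ltW b0) (F lam1) (M * F lam2).
  by apply: H; rewrite // nnegrE ltW // mulr_gt0.
rewrite rho1 [u1 p]up in e1.
rewrite -/rho2 in e2.
apply: (Gh p (u2 p) rho2 M sp u2p rho20 M0).
rewrite powRN.
have g10 : 0 < G p (M * u2 p) (M * rho2).
  by apply: Gp => //; rewrite mulr_gt0.
have g20 : 0 < G p (u2 p) rho2 by apply: Gp.
have A10 : 0 < F lam1 `^ beta by apply: powR_gt0.
have A20 : 0 < F lam2 `^ beta by apply: powR_gt0.
have Mb0 : 0 < M `^ beta by apply: powR_gt0.
rewrite ler_pdivrMr //.
have : G p (u2 p) rho2 * F lam2 `^ beta <= G p (M * u2 p) (M * rho2) * M `^ beta * F lam2 `^ beta.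
  by rewrite e2 -e1 -mulrA ler_wpM2l // ltW.
by rewrite ler_pM2r.
Qed.

End I.


Theorem theorem5p2 (R : realType) (n : nat) (beta : R)
  (F : 'rV[R]_n -> R) (G : 'rV[R]_n.+1 -> R -> R -> R) :
  0 < beta ->
  (forall (s : {perm 'I_n}) (lam : 'rV[R]_n), F (col_perm s lam) = F lam) ->
  (forall lam, Gamma_plus lam -> 0 < F lam) ->
  (forall (t : R) lam, 0 < t -> Gamma_plus lam -> F (t *: lam) = t * F lam) ->
  F (const_mx 1) `^ beta = 1 ->
  (forall lam (i : 'I_n), Gamma_plus lam ->
     derivable F lam (ebase R i) /\ 0 < 'D_(ebase R i) F lam) ->
  (forall x s1 s2, on_sphere x -> 0 < s1 -> 0 < s2 -> 0 < G x s1 s2) ->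
  (forall x s1 s2 m, on_sphere x -> 0 < s1 -> 0 < s2 -> 0 < m ->
     G x (m * s1) (m * s2) >= G x s1 s2 * m `^ (- beta) -> m <= 1) ->
  forall (c : R) (u1 u2 : 'rV[R]_n.+1 -> R),
    is_solution F beta G c u1 -> is_solution F beta G c u2 ->
    forall x, on_sphere x -> u1 x = u2 x.
Proof.
move=> b0 Fs Fp Fh _ Fd Gp Gh c u1 u2 s1 s2 x sx.
apply/le_anti/andP; split.
  exact: (one_side b0 Fs Fp Fh Fd Gp Gh s1 s2 sx).
exact: (one_side b0 Fs Fp Fh Fd Gp Gh s2 s1 sx).
Qed.
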